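(* Let $d\ge 2$ and $k$ be integers with $1\le k\le d-1$, and let $\delta>0$. Then the function $F:\mathbb{R}^d\to\mathbb{R}^d$ defined by $$F({\bm{x}})=\mathrm{Huber}\big(\mathrm{StatTop}_k({\bm{x}});\delta\big)/\delta$$ (with $\mathrm{Huber}(\cdot;\delta)$ applied entrywise) is continuously differentiable.
   Context: For ${\bm{x}}\in\mathbb{R}^d$, let $\mathrm{mean}({\bm{x}})=\frac1d\sum_{i=1}^d x_i$ and $\mathrm{std}({\bm{x}})=\sqrt{\frac{1}{d-1}\sum_{i=1}^d (x_i-\mathrm{mean}({\bm{x}}))^2}$, and let $Q$ be the quantile function (inverse CDF) of the standard Gaussian distribution. Define the threshold $\theta({\bm{x}},k)=\mathrm{mean}({\bm{x}})+\mathrm{std}({\bm{x}})\cdot Q(1-\frac{k}{d})$. The soft-thresholding operator is $\mathrm{SoftThreshold}({\bm{x}},\theta)=\max\{{\bm{x}}-\theta\mathbf{1},\mathbf{0}\}\in\mathbb{R}^d$ (entrywise maximum, $\mathbf{1}$ the all-ones vector), and the statistical top-$k$ operator is $\mathrm{StatTop}_k({\bm{x}})=\mathrm{SoftThreshold}({\bm{x}},\theta({\bm{x}},k))$. The Huber function is, for a scalar $x$, $\mathrm{Huber}(x;\delta)=\frac12 x^2$ if $|x|<\delta$ and $\mathrm{Huber}(x;\delta)=\delta(|x|-\frac12\delta)$ otherwise. *)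

(* Defs.v *)
From HB Require Import structures.
From mathcomp Require Import all_boot all_order all_algebra.
From mathcomp Require Import all_classical all_reals all_analysis.
Set Implicit Arguments. Unset Strict Implicit. Unset Printing Implicit Defensive.
Import Order.TTheory GRing.Theory Num.Theory.
Import numFieldNormedType.Exports.
Local Open Scope classical_set_scope.
Local Open Scope ring_scope.

Section defs.
Variable R : realType.

Definition gauss_cdf (x : R) : R :=
  fine (normal_prob 0 1 `]-oo, x]).

(* quantile function (inverse CDF) of the standard Gaussian:
   Q p = inf { x | p <= Phi x } (generalized inverse; the true inverse for 0<p<1) *)
Definition gauss_quantile (p : R) : R := inf [set x : R | p <= gauss_cdf x].

Variable d : nat.

Definition vmean (x : 'rV[R]_d) : R := (\sum_(i < d) x ord0 i) / d%:R.

Definition vstd (x : 'rV[R]_d) : R :=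
  Num.sqrt ((\sum_(i < d) (x ord0 i - vmean x) ^+ 2) / (d.-1)%:R).

Definition threshold (x : 'rV[R]_d) (k : nat) : R :=
  vmean x + vstd x * gauss_quantile (1 - k%:R / d%:R).

Definition SoftThreshold (x : 'rV[R]_d) (theta : R) : 'rV[R]_d :=
  \row_i Num.max (x ord0 i - theta) 0.

Definition StatTop (k : nat) (x : 'rV[R]_d) : 'rV[R]_d :=
  SoftThreshold x (threshold x k).

Definition Huber (delta x : R) : R :=
  if `|x| < delta then x ^+ 2 / 2 else delta * (`|x| - delta / 2).

Definition HuberStatTop (k : nat) (delta : R) (x : 'rV[R]_d) : 'rV[R]_d :=
  \row_i (Huber delta (StatTop k x ord0 i) / delta).

End defs.

Definition C1 (R : realType) (n m : nat) (f : 'rV[R]_n -> 'rV[R]_m) : Prop :=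
  (forall x, differentiable f x) /\ continuous (fun x => jacobian f x).

(* Main.v *)
Require Import Defs.
From HB Require Import structures.
From mathcomp Require Import all_boot all_order all_algebra.
From mathcomp Require Import all_classical all_reals all_analysis.
From mathcomp Require Import ring lra.
Import Order.TTheory GRing.Theory Num.Theory.
Import numFieldNormedType.Exports.
Local Open Scope ring_scope.

Set Implicit Arguments. Unset Strict Implicit. Unset Printing Implicit Defensive.

Section Helpers.
Local Open Scope classical_set_scope.

Section generic.
Variable R : realType.

Lemma is_diff_quad (V W : normedModType R) (f : V -> W) (L : {linear V -> W}) x C :
  continuous L -> (forall h, `|f (h + x) - f x - L h| <= C * `|h| ^+ 2) ->
  is_diff x f L.
Proof.
move=> Lc Hb.
have dL : f \o shift x = cst (f x) + L +o_ 0 id.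
  apply/eqaddoP => _/posnumP[e].
  have C'0 : 0 < `|C| + 1 by rewrite ltr_wpDl.
  near=> h.
  rewrite /= opprD addrA.
  apply: (le_trans (Hb h)).
  have hle : `|h| <= e%:num / (`|C| + 1).
    by apply: ltW; near: h; apply: nbhs0_lt; rewrite divr_gt0.
  rewrite expr2 mulrA.
  apply: ler_wpM2r => //.
  apply: (@le_trans _ _ ((`|C| + 1) * `|h|)).
    by apply: ler_wpM2r => //; rewrite (le_trans (ler_norm _))// lerDl.
  by rewrite -ler_pdivlMl// mulrC.
have dfe : 'd f x = L :> (V -> W) := diff_unique Lc dL.
apply: DiffDef => //.
by apply/diff_locallyP; rewrite dfe; split.
Unshelve. all: by end_near. Qed.

Lemma is_diff_ext (V W : normedModType R) (f g df dg : V -> W) x :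
  is_diff x f df -> (forall y, f y = g y) -> (forall h, df h = dg h) ->
  is_diff x g dg.
Proof.
move=> H fg dfg.
have -> : g = f by apply/funext => y; rewrite fg.
by have -> : dg = df by apply/funext => y; rewrite dfg.
Qed.

Lemma lin_cont (V W : normedModType R) (f : V -> W) K :
  linear f -> (forall h, `|f h| <= K * `|h|) -> continuous f.
Proof.
move=> fl fb y.
have K'0 : 0 < `|K| + 1 by rewrite ltr_wpDl.
apply/cvgrPdist_lt => e e0.
near=> z.
have -> : f y - f z = f (y - z).
  pose fM := GRing.isLinear.Build _ _ _ _ _ fl.
  pose fL : {linear V -> W} := HB.pack f fM.
  by rewrite -[f]/(fL : V -> W) linearB.
apply: (le_lt_trans (fb _)).
apply: (@le_lt_trans _ _ ((`|K| + 1) * `|y - z|)).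
  by apply: ler_wpM2r => //; rewrite (le_trans (ler_norm _))// lerDl.
rewrite -ltr_pdivlMl// mulrC.
by near: z; apply: cvgr_dist_lt => //; rewrite divr_gt0.
Unshelve. all: by end_near. Qed.

Lemma is_diff_linear (V W : normedModType R) (f : V -> W) x K :
  linear f -> (forall h, `|f h| <= K * `|h|) -> is_diff x f f.
Proof.
move=> fl fb.
pose fM := GRing.isLinear.Build _ _ _ _ _ fl.
pose fL : {linear V -> W} := HB.pack f fM.
have fc : continuous fL by apply: (lin_cont fl fb).
apply: (@is_diff_quad _ _ f fL x 0 fc) => h.
rewrite mul0r /=.
have -> : f (h + x) = f h + f x.
  by rewrite -{1}[h]scale1r fl scale1r.
by rewrite /= addrK subrr normr0.
Qed.

Lemma is_diff_sumf (V W : normedModType R) n (f : 'I_n -> V -> W) df x :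
  (forall i, is_diff x (f i) (df i)) ->
  is_diff x (fun y => \sum_(i < n) f i y) (fun h => \sum_(i < n) df i h).
Proof.
elim: n f df => [|n IH] f df H.
  have H0 : is_diff x (cst (0:W)) (0 : V -> W) by exact: is_diff_cst.
  apply: (is_diff_ext H0) => [y|h]; by rewrite big_ord0.
have H1 := IH (fun i => f (widen_ord (leqnSn n) i)) (fun i => df (widen_ord (leqnSn n) i)) (fun i => H _).
have H2 := is_diffD H1 (H ord_max).
apply: (is_diff_ext H2) => [y|h]; by rewrite big_ord_recr.
Qed.

Lemma is_diffZl_ (V W : normedModType R) (k dk : V -> R) (c : W) x :
  is_diff x k dk -> is_diff x (fun y => k y *: c) (fun h => dk h *: c).
Proof.
move=> H; apply: DiffDef; first exact: differentiableZl.
by rewrite diffZl // diff_val.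
Qed.

Lemma is_diff_row (V : normedModType R) n (f : 'I_n -> V -> R) df x :
  (forall i, is_diff x (f i) (df i)) ->
  is_diff x (fun y => \row_i f i y : 'rV[R]_n) (fun h => \row_i df i h).
Proof.
move=> H.
have H2 : is_diff x (fun y => \sum_(i < n) f i y *: (delta_mx 0 i : 'rV[R]_n))
    (fun h => \sum_(i < n) df i h *: (delta_mx 0 i : 'rV[R]_n)).
  by apply: is_diff_sumf => i; apply: is_diffZl_.
apply: (is_diff_ext H2) => y; rewrite [RHS]row_sum_delta;
  by apply: eq_bigr => i _; rewrite mxE.
Qed.

Lemma is_diff_sqrt (p : R) : 0 < p ->
  is_diff p (@Num.sqrt R) ( *:%R ((2 * Num.sqrt p)^-1)).
Proof.
move=> p0.
have hd := @is_derive1_sqrt R p p0.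
have dv : derivable (@Num.sqrt R) p 1 by apply: ex_derive.
have df := dv; move/derivable1_diffP: df => df.
apply: DiffDef => //.
rewrite deriv1E // derive1E (derive_val).
by apply/funext => h /=; exact: mulrC.
Qed.

Lemma entry_le n (h : 'rV[R]_n) j : `|h ord0 j| <= `|h|.
Proof.
rewrite [leRHS]/Num.Def.normr/= mx_normrE.
apply: le_trans; last exact: (le_bigmax _ _ (ord0, j)).
by [].
Qed.

Lemma cont_mx (T : topologicalType) m n (f : T -> 'M[R]_(m, n)) x :
  (forall i j, {for x, continuous (fun y => f y i j)}) -> {for x, continuous f}.
Proof.
move=> H.
apply/cvgrPdist_le => /= e e0.
have : \forall y \near x, forall ij : 'I_m * 'I_n, `|f x ij.1 ij.2 - f y ij.1 ij.2| <= e.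
  apply: filter_forall => ij.
  by have := H ij.1 ij.2; move/cvgrPdist_le => /(_ e e0).
apply: filter_app; near=> y => Hy.
rewrite /Num.Def.normr/= mx_normrE (bigmax_le _ (ltW e0))//= => ij _.
by rewrite !mxE.
Unshelve. all: by end_near. Qed.

End generic.

Section Gsec.
Variable R : realType.
Definition H (d t : R) := if t <= 0 then 0 else if t < d then t^+2 else 2 * d * t - d^+2.
Definition dH (d t : R) := if t <= 0 then 0 else if t < d then 2 * t else 2 * d.
Lemma Hq (a b d : R) : 0 < d ->
  `|H d b - H d a - dH d a * (b - a)| <= (b - a)^+2.
Proof.
move=> d0; rewrite /H /dH.
have [hb|hb] := leP b 0; have [ha|ha] := leP a 0; try have [ha2|ha2] := ltP a d;
  try have [hb2|hb2] := ltP b d; rewrite ler_norml; (apply/andP; split);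
  try nra.
all: have := sqr_ge0 (b - a); rewrite !expr2; nra.
Qed.

Lemma dH_lip (d a b : R) : 0 < d -> `|dH d a - dH d b| <= 2 * `|a - b|.
Proof.
move=> d0; rewrite /dH.
have [hb|hb] := leP b 0; have [ha|ha] := leP a 0; try have [ha2|ha2] := ltP a d;
  try have [hb2|hb2] := ltP b d; rewrite ler_norml; (apply/andP; split);
  rewrite ?ler_norml; try (case: (ler_normlP (a - b) _ (lexx _)) => h1 h2); nra.
Qed.

Lemma dH0 d : dH d 0 = 0. Proof. by rewrite /dH lexx. Qed.
Lemma H0 d : H d 0 = 0. Proof. by rewrite /H lexx. Qed.

Lemma dH_le d t : 0 < d -> `|dH d t| <= 2 * `|t|.
Proof. by move=> d0; have := dH_lip t 0 d0; rewrite dH0 !subr0. Qed.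

Lemma H_le d t : 0 < d -> `|H d t| <= t ^+ 2.
Proof. by move=> d0; have := Hq 0 t d0; rewrite H0 dH0 !subr0 mul0r subr0. Qed.

Lemma lip_cont (f : R -> R) K : (forall a b, `|f a - f b| <= K * `|a - b|) -> continuous f.
Proof.
move=> fb y.
have K'0 : 0 < `|K| + 1 by rewrite ltr_wpDl.
apply/cvgrPdist_lt => e e0.
near=> z.
apply: (le_lt_trans (fb _ _)).
apply: (@le_lt_trans _ _ ((`|K| + 1) * `|y - z|)).
  by apply: ler_wpM2r => //; rewrite (le_trans (ler_norm _))// lerDl.
rewrite -ltr_pdivlMl// mulrC.
by near: z; apply: cvgr_dist_lt => //; rewrite divr_gt0.
Unshelve. all: by end_near. Qed.

Lemma huberE (delta v : R) : 0 < delta ->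
  Huber delta (Num.max v 0) / delta = H delta v / (2 * delta).
Proof.
move=> d0; rewrite /Huber /H.
have [hv|hv] := leP v 0.
  by rewrite normr0 d0 expr0n /= !mul0r.
rewrite (gtr0_norm hv).
have [h2|h2] := ltP v delta; field; by rewrite lt0r_neq0.
Qed.

End Gsec.

Section main.
Variables (R : realType) (d : nat) (q delta : R).
Hypotheses (d2 : (2 <= d)%N) (delta0 : 0 < delta).
Local Notation V := 'rV[R]_d.

Definition cc (j : 'I_d) (x : V) := x ord0 j - vmean x.
Definition Sx (x : V) := \sum_(l < d) cc l x ^+ 2.
Definition Px (x : V) := Sx x / (d.-1)%:R.
Lemma vstdE x : vstd x = Num.sqrt (Px x). Proof. by []. Qed.

Lemma dn0 : (d%:R : R) != 0. Proof. by rewrite pnatr_eq0 -lt0n (leq_trans _ d2). Qed.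
Lemma d1ge1 : 1 <= ((d.-1)%:R : R).
Proof. by rewrite ler1n -ltnS prednK // (leq_trans _ d2). Qed.
Lemma d1gt0 : 0 < ((d.-1)%:R : R).
Proof. exact: (lt_le_trans ltr01 d1ge1). Qed.
Lemma dE : (d%:R : R) = (d.-1)%:R + 1.
Proof. by rewrite natr1 prednK // (leq_trans _ d2). Qed.

Lemma vmean_lin : linear (@vmean R d).
Proof.
move=> a u v; rewrite /vmean.
under eq_bigr do rewrite !mxE.
rewrite big_split /= -mulr_sumr mulrDl -mulrA; reflexivity.
Qed.

Lemma vmean_le (h : V) : `|vmean h| <= `|h|.
Proof.
rewrite /vmean normrM normfV normr_nat ler_pdivrMr ?normr_gt0 ?dn0 //.
apply: (le_trans (ler_norm_sum _ _ _)).
apply: (@le_trans _ _ (\sum_(i < d) `|h|)).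
  by apply: ler_sum => i _; exact: entry_le.
  by rewrite sumr_const card_ord mulr_natr lexx.
by rewrite ltr0n (leq_trans _ d2).
Qed.

Lemma cc_lin j : linear (cc j).
Proof.
move=> a u v; rewrite /cc vmean_lin !mxE.
rewrite /GRing.scale /=; ring.
Qed.

Lemma cc_le j (h : V) : `|cc j h| <= 2 * `|h|.
Proof.
rewrite /cc (le_trans (ler_normB _ _))// mulr2n mulrDl mul1r.
by rewrite lerD ?entry_le ?vmean_le.
Qed.

Lemma is_diff_cc x j : is_diff x (cc j) (cc j).
Proof. exact: (is_diff_linear x (cc_lin j) (cc_le j)). Qed.

Lemma sum_cc x : \sum_(l < d) cc l x = 0.
Proof.
rewrite /cc sumrB sumr_const card_ord /vmean.
by rewrite -[_ *+ d]mulr_natr divfK ?dn0 // subrr.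
Qed.

Lemma is_diff_S x : is_diff x Sx (fun h => \sum_(l < d) (cc l x * cc l h + cc l x * cc l h)).
Proof.
apply: (is_diff_sumf (fun l => _)) => l.
have := is_diffM (is_diff_cc x l) (is_diff_cc x l).
move=> H; apply: (is_diff_ext H) => [y|h] /=; first by rewrite expr2.
by [].
Qed.

Definition dS (x h : V) := \sum_(l < d) (cc l x * cc l h + cc l x * cc l h).

Lemma is_diff_P x : is_diff x Px (fun h => dS x h / (d.-1)%:R).
Proof.
have := is_diffZ ((d.-1)%:R^-1) (is_diff_S x).
move=> H; apply: (is_diff_ext H) => [y|h] /=; rewrite /Px /dS mulrC //.
Qed.

Lemma Px_ge0 x : 0 <= Px x.
Proof.
rewrite /Px divr_ge0 ?ler0n //; apply: sumr_ge0 => l _; exact: sqr_ge0.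
Qed.

Lemma Px_cont : continuous Px.
Proof. move=> x; have := @ex_diff _ _ _ _ _ _ _ (is_diff_P x). move=> H. apply: differentiable_continuous. exact H. Qed.

Lemma vstd_cont : continuous (@vstd R d).
Proof.
move=> x; rewrite -[@vstd R d]/(Num.sqrt \o Px).
apply: continuous_comp; [exact: Px_cont | exact: sqrt_continuous].
Qed.

Lemma cc_cont j : continuous (cc j).
Proof. exact: (lin_cont (cc_lin j) (cc_le j)). Qed.

Definition uu i (x : V) := cc i x - vstd x * q.

Lemma uu_cont i : continuous (uu i).
Proof.
move=> x; have -> : uu i = cc i - ((@vstd R d) \* cst q) by apply/funext.
apply: continuousB; first exact: cc_cont.
apply: continuousM; [exact: vstd_cont | exact: cst_continuous].
Qed.

Definition dstd (x h : V) := (\sum_(l < d) cc l x * h ord0 l) / ((d.-1)%:R * vstd x).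

Lemma sum_cc_h x h : \sum_(l < d) cc l x * cc l h = \sum_(l < d) cc l x * h ord0 l.
Proof.
rewrite /cc; under eq_bigr do rewrite mulrBr.
by rewrite sumrB -mulr_suml sum_cc mul0r subr0.
Qed.

Lemma is_diff_std x : 0 < vstd x -> is_diff x (@vstd R d) (dstd x).
Proof.
move=> s0.
have P0 : 0 < Px x by rewrite -sqrtr_gt0.
have H := is_diff_comp (is_diff_P x) (is_diff_sqrt P0).
apply: (is_diff_ext H) => [y|h] //=.
rewrite /dstd /dS -sum_cc_h big_split /= -vstdE.
rewrite -mulr2n.
have sn0 : vstd x != 0 by rewrite gt_eqF.
have dn1 : ((d.-1)%:R : R) != 0 by rewrite gt_eqF // d1gt0.
rewrite -[(\sum_(i < d) _ ) *+ 2]mulr_natr.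
rewrite /GRing.scale /=. field. by rewrite sn0 dn1.
Qed.

Definition gg (v : R) := H delta v / (2 * delta).
Definition dg (v : R) := dH delta v / (2 * delta).

Lemma is_diff_gg v : is_diff v gg ( *:%R (dg v)).
Proof.
apply: (@is_diff_quad _ _ _ gg ( *:%R (dg v)) v ((2 * delta)^-1)).
  exact: scaler_continuous.
move=> h.
have := Hq v (h + v) delta0; rewrite addrK.
rewrite /gg /dg => Hb.
have d2n : 2 * delta != 0 by rewrite mulf_neq0 // gt_eqF.
change ((dH delta v / (2 * delta)) *: h) with (dH delta v / (2 * delta) * h).
have -> : H delta (h + v) / (2 * delta) - H delta v / (2 * delta) - dH delta v / (2 * delta) * h
  = (H delta (h + v) - H delta v - dH delta v * h) / (2 * delta).
  rewrite !mulrBl; congr (_ - _); rewrite mulrAC //.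
rewrite normrM normfV (gtr0_norm (mulr_gt0 _ delta0)) //.
rewrite real_normK ?num_real //.
by rewrite mulrC ler_pM2l ?invr_gt0 ?mulr_gt0.
Qed.

Definition DD i (x h : V) := dg (uu i x) * (cc i h - q * dstd x h).

Lemma is_diff_F_off i x : 0 < vstd x -> is_diff x (fun y => gg (uu i y)) (DD i x).
Proof.
move=> s0.
have Hu : is_diff x (uu i) (fun h => cc i h - q * dstd x h).
  have := is_diffB (is_diff_cc x i) (is_diffZ q (is_diff_std s0)).
  move=> H; apply: (is_diff_ext H) => [y|h] /=; rewrite /uu ?[vstd y * q]mulrC //.
have H := is_diff_comp Hu (is_diff_gg (uu i x)).
by apply: (is_diff_ext H).
Qed.

Lemma cc_add l (h x : V) : cc l (h + x) = cc l h + cc l x.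
Proof. by move: (cc_lin l 1 h x); rewrite !scale1r. Qed.

Lemma diag_cc x : vstd x = 0 -> forall l, cc l x = 0.
Proof.
move=> s0 l.
have P0 : Px x <= 0 by rewrite -sqrtr_eq0 -vstdE s0.
have P00 : Px x = 0 by apply/le_anti; rewrite P0 Px_ge0.
have S0 : Sx x = 0.
  move: P00; rewrite /Px => /eqP; rewrite mulf_eq0 invr_eq0 (gt_eqF d1gt0) orbF.
  by move/eqP.
have := @psumr_eq0P _ _ xpredT (fun l => cc l x ^+ 2) (fun l _ => sqr_ge0 _) S0 l isT.
by move/eqP; rewrite sqrf_eq0 => /eqP.
Qed.

Lemma uu_diag i (h x : V) : vstd x = 0 -> uu i (h + x) = uu i h.
Proof.
move=> s0.
have E l : cc l (h + x) = cc l h by rewrite cc_add (diag_cc s0) addr0.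
rewrite /uu E !vstdE /Px /Sx.
by under eq_bigr do rewrite E.
Qed.

Lemma vstd_le (h : V) : vstd h <= 3 * `|h|.
Proof.
rewrite vstdE -[3 * `|h|]ger0_norm ?mulr_ge0 // -sqrtr_sqr ler_sqrt ?sqr_ge0 //.
have Sle : Sx h <= (2 * `|h|) ^+ 2 *+ d.
  rewrite /Sx -[d in _ *+ d]card_ord -sumr_const.
  apply: ler_sum => l _.
  have := cc_le l h; have := normr_ge0 (cc l h).
  rewrite -[cc l h ^+ 2]real_normK ?num_real //; nra.
rewrite /Px ler_pdivrMr ?d1gt0 //.
apply: (le_trans Sle).
rewrite -mulr_natr dE.
have := d1ge1; have := normr_ge0 h; nra.
Qed.

Lemma uu_le i (h : V) : `|uu i h| <= (2 + 3 * `|q|) * `|h|.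
Proof.
rewrite /uu (le_trans (ler_normB _ _))// normrM.
have := cc_le i h; have := vstd_le h; have := normr_ge0 q; have := normr_ge0 h.
have sn := sqrtr_ge0 (Px h); rewrite -vstdE in sn.
rewrite (ger0_norm sn); nra.
Qed.

Lemma dg0 : dg 0 = 0. Proof. by rewrite /dg dH0 mul0r. Qed.
Lemma gg0 : gg 0 = 0. Proof. by rewrite /gg H0 mul0r. Qed.

Lemma uu_diag0 i x : vstd x = 0 -> uu i x = 0.
Proof. by move=> s0; rewrite /uu (diag_cc s0) s0 mul0r subrr. Qed.

Lemma is_diff_F_diag i x : vstd x = 0 -> is_diff x (fun y => gg (uu i y)) (DD i x).
Proof.
move=> s0.
have l0 : linear (fun _ : V => (0 : R)).
  by move=> a u v; rewrite scaler0 addr0.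
pose L0 : {linear V -> R} := HB.pack (fun _ : V => (0 : R)) (GRing.isLinear.Build _ _ _ _ _ l0).
have H0 : is_diff x (fun y => gg (uu i y)) (L0 : V -> R).
  apply: (@is_diff_quad _ _ _ _ L0 x (((2 + 3 * `|q|) ^+ 2) / (2 * delta))).
    exact: cst_continuous.
  move=> h; rewrite /= subr0 (uu_diag _ _ s0) (uu_diag0 _ s0) gg0 subr0.
  rewrite /gg normrM normfV (gtr0_norm (mulr_gt0 _ delta0)) //.
  have := H_le (uu i h) delta0; have := uu_le i h.
  have := normr_ge0 (uu i h); have := normr_ge0 h.
  rewrite -[uu i h ^+ 2]real_normK ?num_real // => h0 u0 uh Hl.
  rewrite [leRHS]mulrAC ler_pM2r ?invr_gt0 ?mulr_gt0 //.
  apply: (le_trans Hl); rewrite -exprMn; apply: lerXn2r => //.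
  by rewrite nnegrE mulr_ge0 // addr_ge0 // mulr_ge0.
apply: (is_diff_ext H0) => // h.
by rewrite /DD uu_diag0 // dg0 mul0r.
Qed.

Lemma dg_cont : continuous dg.
Proof.
apply: (@lip_cont _ dg ((2 * delta)^-1 * 2)) => a b.
rewrite /dg -mulrBl normrM normfV (gtr0_norm (mulr_gt0 _ delta0)) // mulrC -mulrA.
by rewrite ler_pM2l ?invr_gt0 ?mulr_gt0 // dH_lip.
Qed.

Lemma dg_le t : `|dg t| <= `|t| / delta.
Proof.
rewrite /dg normrM normfV (gtr0_norm (mulr_gt0 _ delta0)) //.
have -> : `|t| / delta = 2 * `|t| / (2 * delta).
  by rewrite invfM mulrACA mulfV ?mul1r // pnatr_eq0.
by rewrite ler_pM2r ?invr_gt0 ?mulr_gt0 // dH_le.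
Qed.

Lemma sum_delta y j : \sum_(l < d) cc l y * (delta_mx 0 j : V) ord0 l = cc j y.
Proof.
rewrite (bigD1 j) //= mxE !eqxx mulr1 big1 ?addr0 // => l /negbTE hl.
by rewrite mxE hl andbF mulr0.
Qed.

Lemma DDE i j y : DD i y (delta_mx 0 j) =
  dg (uu i y) * (cc i (delta_mx 0 j) - q * (cc j y / ((d.-1)%:R * vstd y))).
Proof. by rewrite /DD /dstd sum_delta. Qed.

Lemma cc_sq_le j y : cc j y ^+ 2 <= (d.-1)%:R * vstd y ^+ 2.
Proof.
rewrite vstdE sqr_sqrtr ?Px_ge0 // /Px mulrC divfK ?(gt_eqF d1gt0) //.
rewrite /Sx (bigD1 j) //= lerDl; apply: sumr_ge0 => l _; exact: sqr_ge0.
Qed.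

Lemma ratio_le j y : `|cc j y / ((d.-1)%:R * vstd y)| <= 1.
Proof.
have sn := sqrtr_ge0 (Px y); rewrite -vstdE in sn.
have [s0|s0] := eqVneq (vstd y) 0.
  by rewrite s0 mulr0 invr0 mulr0 normr0 ler01.
have sp : 0 < vstd y by rewrite lt0r s0.
rewrite normrM normfV (gtr0_norm (mulr_gt0 d1gt0 sp)) ler_pdivrMr ?mulr_gt0 ?d1gt0 // mul1r.
have := cc_sq_le j y; have := d1ge1; have := normr_ge0 (cc j y).
rewrite -[cc j y ^+ 2]real_normK ?num_real //.
set D := ((d.-1)%:R : R); set sS := vstd y; set a := `|cc j y| => a0 D1 Ha.
have E1 : D * sS ^+ 2 <= (D * sS) ^+ 2.
  have h1 : 0 <= D * sS ^+ 2 by rewrite mulr_ge0 ?sqr_ge0 // (le_trans ler01 D1).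
  have -> : (D * sS) ^+ 2 = D * sS ^+ 2 * D by ring.
  by rewrite ler_peMr.
have E2 : a ^+ 2 <= (D * sS) ^+ 2 := le_trans Ha E1.
have Dp : 0 <= D * sS by rewrite mulr_ge0 // (le_trans ler01 D1).
by move: E2; rewrite ler_pXn2r // ?nnegrE.
Qed.

Lemma cM (T : topologicalType) (f g : T -> R) x :
  {for x, continuous f} -> {for x, continuous g} -> {for x, continuous (fun y => f y * g y)}.
Proof. exact: continuousM. Qed.
Lemma cB (T : topologicalType) (f g : T -> R) x :
  {for x, continuous f} -> {for x, continuous g} -> {for x, continuous (fun y => f y - g y)}.
Proof. exact: continuousB. Qed.
Lemma cV (T : topologicalType) (f : T -> R) x : f x != 0 ->
  {for x, continuous f} -> {for x, continuous (fun y => (f y)^-1)}.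
Proof. exact: continuousV. Qed.

Lemma DD_cont i j : continuous (fun y => DD i y (delta_mx 0 j)).
Proof.
move=> x.
set c := cc i (delta_mx 0 j).
have -> : (fun y => DD i y (delta_mx 0 j)) =
  (fun y => dg (uu i y) * (c - q * (cc j y * ((d.-1)%:R * vstd y)^-1))).
  by apply/funext => y; rewrite DDE.
have sn := sqrtr_ge0 (Px x); rewrite -vstdE in sn.
have [s0|s0] := eqVneq (vstd x) 0.
  have u0 := uu_diag0 i s0.
  apply/(@cvgrPdist_lt _ _ _ (nbhs x) _) => e e0.
  rewrite u0 dg0 mul0r.
  have M0 : 0 < `|c| + `|q| + 1 by rewrite ltr_wpDl ?addr_ge0.
  have := @uu_cont i x => /(@cvgrPdist_lt _ _ _ (nbhs x) _) /(_ (e * delta / (`|c| + `|q| + 1))).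
  rewrite !divr_gt0 ?mulr_gt0 // => /(_ isT).
  apply: filter_app; near=> y => Hy.
  rewrite sub0r normrN normrM.
  have H1 := dg_le (uu i y).
  have H2 : `|c - q * (cc j y * ((d.-1)%:R * vstd y)^-1)| <= `|c| + `|q| + 1.
    rewrite (le_trans (ler_normB _ _))// -addrA lerD2l normrM.
    apply: (le_trans (ler_wpM2l (normr_ge0 q) (ratio_le j y))).
    by rewrite mulr1 lerDl ler01.
  move: Hy; rewrite u0 sub0r normrN => Hy.
  have H3 : `|dg (uu i y)| < e / (`|c| + `|q| + 1).
    apply: (le_lt_trans H1).
    by rewrite ltr_pdivrMr // mulrAC.
  apply: (le_lt_trans (ler_wpM2l (normr_ge0 _) H2)).
  by rewrite -ltr_pdivlMr.
have sp : 0 < vstd x by rewrite lt0r s0.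
apply: (@cM V (fun y => dg (uu i y)) (fun y => c - q * (cc j y * ((d.-1)%:R * vstd y)^-1)) x).
  exact: (continuous_comp (@uu_cont i x) (@dg_cont (uu i x))).
apply: cB; first exact: cst_continuous.
apply: cM; first exact: cst_continuous.
apply: cM; first exact: cc_cont.
apply: cV; first by rewrite mulf_neq0 // gt_eqF // d1gt0.
apply: cM; first exact: cst_continuous.
exact: vstd_cont.
Unshelve. all: by end_near. Qed.
End main.

End Helpers.

Unset Implicit Arguments.

Theorem theorem2 (R : realType) (d k : nat) (delta : R) :
  (2 <= d)%N -> (1 <= k)%N -> (k <= d.-1)%N -> 0 < delta ->
  C1 (@HuberStatTop R d k delta).
Proof.
move=> d2 _ _ del0.
set q := gauss_quantile (1 - k%:R / d%:R : R).
have FE : @HuberStatTop R d k delta = (fun y : 'rV[R]_d => \row_i gg delta (uu q i y)).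
  apply/funext => y; apply/rowP => i; rewrite /HuberStatTop mxE /StatTop /SoftThreshold mxE.
  rewrite [RHS]mxE /gg.
  have -> : uu q i y = y ord0 i - threshold y k by rewrite /uu /cc /threshold opprD addrA.
  exact: huberE.
have HD : forall x : 'rV[R]_d, is_diff x (@HuberStatTop R d k delta) (fun h => \row_i DD q delta i x h).
  move=> x; rewrite FE; apply: is_diff_row => i.
  have sn := sqrtr_ge0 (Px x); rewrite -vstdE in sn.
  have [s0|s0] := eqVneq (vstd x) 0.
    exact: is_diff_F_diag.
  by apply: is_diff_F_off => //; rewrite lt0r s0.
split.
  by move=> x; exact: (@ex_diff _ _ _ _ _ _ _ (HD x)).
have JE : (fun x : 'rV[R]_d => jacobian (@HuberStatTop R d k delta) x) =
    fun x : 'rV[R]_d => \matrix_(j, i) DD q delta i x (delta_mx 0 j).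
  apply/funext => x; rewrite /jacobian (@diff_val _ _ _ _ _ _ _ (HD x)).
  by apply/matrixP => j i; rewrite !mxE.
rewrite JE => x; apply: cont_mx => j i.
have -> : (fun y => (\matrix_(j0, i0) DD q delta i0 y (delta_mx 0 j0)) j i) =
  (fun y => DD q delta i y (delta_mx 0 j)) by apply/funext => y; rewrite mxE.
exact: DD_cont.
Qed.
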